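(* Let $(\mathcal{A},v)$ be a valued abelian group and $A_1,\dots,A_n$ subgroups of $\mathcal{A}$ such that each $(A_i,v|_{A_i})$ is spherically complete. If the sum $A_1+\dots+A_n\subseteq\mathcal{A}$ is pseudo-direct, then $(A_1+\dots+A_n, v)$ is spherically complete.
   Context: A valued abelian group $(A,v)$ is an abelian group $A$ with a map $v:A\to \Gamma\cup\{\infty\}$, $a\mapsto va$, onto a totally ordered set with largest element $\infty$, such that $va=\infty\iff a=0$ and $v(a-a')\ge\min\{va,va'\}$ for all $a,a'\in A$. For $a\in A$ and $\alpha\in v(A)$ the ball is $B_\alpha(a)=\{a'\in A\mid v(a-a')\ge\alpha\}$. A nest of balls is a set of balls totally ordered by inclusion; $(A,v)$ is spherically complete if every nest of balls has nonempty intersection. The sum $A_1+\dots+A_n$ of subgroups of $(\mathcal{A},v)$ is pseudo-direct if for every nonzero $a\in A_1+\dots+A_n$ there are $a_i\in A_i$ ($1\le i\le n$) with $v\sum_{i=1}^n a_i=\min_{1\le i\le n}va_i$ and $v\big(a-\sum_{i=1}^n a_i\big)>va$. *)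

(* Defs.v *)
From HB Require Import structures.
From mathcomp Require Import all_boot all_order all_algebra.
Set Implicit Arguments. Unset Strict Implicit. Unset Printing Implicit Defensive.
Import Order.TTheory GRing.Theory.
Local Open Scope ring_scope.

Section ValuedGroup.
Variables (d : Order.disp_t) (G : orderType d) (infty : G) (A : zmodType) (v : A -> G).

(* (A, v) is a valued abelian group: v maps A onto the totally ordered set G,
   whose largest element infty plays the role of the symbol \infty
   (so G = Gamma \cup {infty}). *)
Definition valued_group : Prop :=
  [/\ (forall g : G, (g <= infty)%O),
      (forall g : G, exists a : A, v a = g),
      (forall a : A, v a = infty <-> a = 0) &
      (forall a a' : A, (Order.min (v a) (v a') <= v (a - a'))%O)].

Definition subgroup (S : A -> Prop) : Prop :=
  S 0 /\ (forall a b, S a -> S b -> S (a - b)).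

Definition ball (S : A -> Prop) (alpha : G) (a : A) : A -> Prop :=
  fun a' => S a' /\ (alpha <= v (a - a'))%O.

Definition is_ball (S : A -> Prop) (B : A -> Prop) : Prop :=
  exists alpha a, S a /\ (exists s, S s /\ v s = alpha) /\
    (forall x, B x <-> ball S alpha a x).

Definition nest (S : A -> Prop) (N : (A -> Prop) -> Prop) : Prop :=
  (forall B, N B -> is_ball S B) /\
  (forall B1 B2, N B1 -> N B2 ->
     (forall x, B1 x -> B2 x) \/ (forall x, B2 x -> B1 x)).

Definition spherically_complete (S : A -> Prop) : Prop :=
  forall N, nest S N -> exists x, S x /\ forall B, N B -> B x.

Definition sum_subgroups n (Ai : 'I_n -> A -> Prop) : A -> Prop :=
  fun a => exists f : 'I_n -> A, (forall i, Ai i (f i)) /\ a = \sum_(i < n) f i.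

Definition pseudo_direct n (Ai : 'I_n -> A -> Prop) : Prop :=
  forall a, sum_subgroups Ai a -> a != 0 ->
    exists f : 'I_n -> A, (forall i, Ai i (f i)) /\
      v (\sum_(i < n) f i) = \big[Order.min/infty]_(i < n) v (f i) /\
      (v a < v (a - \sum_(i < n) f i))%O.

End ValuedGroup.

(* Main.v *)
Require Import Defs.
From mathcomp Require Import all_boot all_order all_algebra.
From mathcomp Require Import boolp classical_sets.
From Stdlib Require Import ClassicalEpsilon.
Set Implicit Arguments. Unset Strict Implicit. Unset Printing Implicit Defensive.
Import Order.TTheory GRing.Theory.
Local Open Scope ring_scope.
Local Open Scope order_scope.

Lemma v0 d (G : orderType d) (infty : G) (A : zmodType) (v : A -> G) :
  valued_group infty v -> v 0 = infty.
Proof. by case=> _ _ H _; apply/H. Qed.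

Lemma vtop d (G : orderType d) (infty : G) (A : zmodType) (v : A -> G) g :
  valued_group infty v -> g <= infty.
Proof. by case=> H _ _ _. Qed.

Lemma vsub d (G : orderType d) (infty : G) (A : zmodType) (v : A -> G) g a b :
  valued_group infty v -> g <= v a -> g <= v b -> g <= v (a - b).
Proof.
case=> _ _ _ H ha hb; apply: le_trans (H a b); by rewrite le_min ha hb.
Qed.

Lemma vN d (G : orderType d) (infty : G) (A : zmodType) (v : A -> G) a :
  valued_group infty v -> v (- a) = v a.
Proof.
move=> VG; have h1 : forall b, v b <= v (- b).
  move=> b; rewrite -sub0r; apply: (vsub VG) => //.
  by rewrite (v0 VG) (vtop _ VG).
by apply/eqP; rewrite eq_le h1 -{2}(opprK a) h1.
Qed.

Lemma vadd d (G : orderType d) (infty : G) (A : zmodType) (v : A -> G) g a b :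
  valued_group infty v -> g <= v a -> g <= v b -> g <= v (a + b).
Proof.
move=> VG ha hb; rewrite -(opprK b); apply: (vsub VG) => //.
by rewrite (vN _ VG).
Qed.

Lemma vsym d (G : orderType d) (infty : G) (A : zmodType) (v : A -> G) a b :
  valued_group infty v -> v (a - b) = v (b - a).
Proof. by move=> VG; rewrite -(vN _ VG) opprB. Qed.

Lemma viso d (G : orderType d) (infty : G) (A : zmodType) (v : A -> G) a b :
  valued_group infty v -> v a < v (a - b) -> v b = v a.
Proof.
move=> VG h.
have e1 : b = a - (a - b) by rewrite opprB addrC subrK.
have h1 : v a <= v b.
  by rewrite e1; apply: (vsub VG); [exact: lexx | exact: ltW].
apply/eqP; rewrite eq_le h1 andbT.
have e2 : a = b - (b - a) by rewrite opprB addrC subrK.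
case: (leP (v b) (v a)) => // hba.
have : v a < Order.min (v b) (v (a - b)) by rewrite lt_min hba h.
have : Order.min (v b) (v (a - b)) <= v a.
  rewrite {2}e2; apply: (vsub VG); first by rewrite ge_min lexx.
  by rewrite (vsym _ _ VG) ge_min lexx orbT.
move=> h2 h3; have := lt_le_trans h3 h2.
by rewrite ltxx.
Qed.

Lemma vsum d (G : orderType d) (infty : G) (A : zmodType) (v : A -> G) g n
  (F : 'I_n -> A) :
  valued_group infty v -> (forall i, g <= v (F i)) -> g <= v (\sum_(i < n) F i).
Proof.
move=> VG H; apply: (big_ind (fun a => g <= v a)).
- by rewrite (v0 VG) (vtop _ VG).
- by move=> x y; apply: (vadd VG).
- by move=> i _; apply: H.
Qed.

Lemma bigmin_le d (G : orderType d) (infty : G) n (F : 'I_n -> G) j :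
  \big[Order.min/infty]_(i < n) F i <= F j.
Proof.
rewrite unlock /=.
have : j \in index_enum 'I_n by rewrite mem_index_enum.
elim: (index_enum _) => //= x s IH; rewrite inE => /orP[/eqP ->|/IH h].
  by rewrite ge_min lexx.
by rewrite ge_min h orbT.
Qed.

Lemma le_bigmin d (G : orderType d) (infty : G) n (F : 'I_n -> G) g :
  g <= infty -> (forall i, g <= F i) -> g <= \big[Order.min/infty]_(i < n) F i.
Proof.
move=> h H; apply: (big_ind (fun a => g <= a)); first exact: h.
- by move=> x y hx hy; rewrite le_min hx hy.
- by move=> i _; apply: H.
Qed.

Lemma idA (A : zmodType) (a b y z : A) : a - z = (a - y) - ((b - y) - (b - z)).
Proof. rewrite !opprB addrA addrAC -(addrA a) (addrA (-y)) addNr add0r.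
by rewrite -(addrA a) (addrA (-b)) addNr add0r. Qed.
Lemma idB (A : zmodType) (j x k: A) : k - x = (j - x) - (j - k).
Proof. by rewrite opprB addrC addrA [in RHS]addrC addrA addKr. Qed.
Lemma idC (A : zmodType) (j y k: A) : j - y = (j - k) - (y - k).
Proof. by rewrite opprB addrA subrK. Qed.

Lemma ball_nest d (G : orderType d) (infty : G) (A : zmodType) (v : A -> G)
  (S : A -> Prop) al be a b y :
  valued_group infty v -> ball v S al a y -> ball v S be b y -> al <= be ->
  forall z, ball v S be b z -> ball v S al a z.
Proof.
move=> VG [_ ha] [_ hb] hab z [Sz hz]; split=> //.
rewrite (idA a b y z).
apply: (vsub VG) => //; apply: (vsub VG); exact: le_trans hab _.
Qed.

Lemma gen d (G : orderType d) (infty : G) (A : zmodType) (v : A -> G)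
  (S : A -> Prop) (I : Type) (M : I -> Prop) (rad : I -> G) (cen : I -> A) :
  valued_group infty v -> subgroup S -> spherically_complete v S ->
  (forall j, M j -> S (cen j)) ->
  (forall j k, M j -> M k ->
     (forall x, ball v S (rad j) (cen j) x -> ball v S (rad k) (cen k) x) \/
     (forall x, ball v S (rad k) (cen k) x -> ball v S (rad j) (cen j) x)) ->
  exists z, S z /\ forall j, M j -> rad j <= v (cen j - z).
Proof.
move=> VG [S0 Ssub] SC Mc Mn.
have cin : forall j, M j -> ball v S (rad j) (cen j) (cen j).
  by move=> j Mj; split; [exact: Mc|rewrite subrr (v0 VG) (vtop _ VG)].
case: (pselect (exists j0, M j0 /\ forall k, M k -> forall x,
   ball v S (rad j0) (cen j0) x -> ball v S (rad k) (cen k) x)).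
  move=> [j0 [Mj0 H]]; exists (cen j0); split; first exact: Mc.
  by move=> j Mj; case: (H j Mj _ (cin _ Mj0)).
move=> Hnm.
pose N' := fun B : A -> Prop => exists j k x, M j /\ M k /\
  (forall y, ball v S (rad k) (cen k) y -> ball v S (rad j) (cen j) y) /\
  ball v S (rad j) (cen j) x /\ ~ ball v S (rad k) (cen k) x /\
  B = ball v S (v (cen k - x)) (cen k).
have key : forall j k x, M j -> M k ->
  (forall y, ball v S (rad k) (cen k) y -> ball v S (rad j) (cen j) y) ->
  ball v S (rad j) (cen j) x -> ~ ball v S (rad k) (cen k) x ->
  (forall y, ball v S (rad k) (cen k) y -> ball v S (v (cen k - x)) (cen k) y) /\
  (forall y, ball v S (v (cen k - x)) (cen k) y -> ball v S (rad j) (cen j) y).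
  move=> j k x Mj Mk sub [Sx bx] nbk.
  have ltk : v (cen k - x) < rad k.
    by rewrite ltNge; apply/negP => h; apply: nbk.
  split.
    by move=> y [Sy hy]; split=> //; apply: ltW; exact: lt_le_trans hy.
  have [_ hjk] := sub _ (cin _ Mk).
  have hr : rad j <= v (cen k - x).
    rewrite (idB (cen j)).
    by apply: (vsub VG).
  move=> y [Sy hy]; split=> //.
  rewrite (idC _ _ (cen k)).
  apply: (vsub VG) => //; rewrite (vsym _ _ VG); exact: le_trans hy.
have [z [Sz Hz]] : exists z, S z /\ forall B, N' B -> B z.
  apply: SC; split.
    move=> B [j [k [x [Mj [Mk [sub [[Sx bx] [nbk ->]]]]]]]].
    exists (v (cen k - x)), (cen k); split; first exact: Mc.
    split=> //; exists (cen k - x); split=> //; apply: Ssub => //; exact: Mc.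
  move=> B1 B2 [j1 [k1 [x1 [Mj1 [Mk1 [sub1 [b1 [nb1 ->]]]]]]]]
                [j2 [k2 [x2 [Mj2 [Mk2 [sub2 [b2 [nb2 ->]]]]]]]].
  have [s1 _] := key _ _ _ Mj1 Mk1 sub1 b1 nb1.
  have [s2 _] := key _ _ _ Mj2 Mk2 sub2 b2 nb2.
  have [y [y1 y2]] : exists y, ball v S (v (cen k1 - x1)) (cen k1) y /\
                               ball v S (v (cen k2 - x2)) (cen k2) y.
    case: (Mn _ _ Mk1 Mk2) => h.
      by exists (cen k1); split; [apply: s1|apply: s2; apply: h]; exact: cin.
    by exists (cen k2); split; [apply: s1; apply: h|apply: s2]; exact: cin.
  case: (leP (v (cen k1 - x1)) (v (cen k2 - x2))) => hl.
    by right; apply: (ball_nest VG y1 y2).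
  by left; apply: (ball_nest VG y2 y1); apply: ltW.
exists z; split=> // j Mj.
have [k [Mk nsub]] : exists k, M k /\ ~ (forall x,
   ball v S (rad j) (cen j) x -> ball v S (rad k) (cen k) x).
  case: (pselect (exists k, M k /\ ~ (forall x,
   ball v S (rad j) (cen j) x -> ball v S (rad k) (cen k) x))) => // Hn.
  exfalso; apply: Hnm; exists j; split=> // k Mk.
  case: (pselect (forall x, ball v S (rad j) (cen j) x -> ball v S (rad k) (cen k) x)) => // Hc.
  by exfalso; apply: Hn; exists k.
have sub : forall y, ball v S (rad k) (cen k) y -> ball v S (rad j) (cen j) y.
  by case: (Mn _ _ Mj Mk).
have [x [bx nbx]] : exists x, ball v S (rad j) (cen j) x /\ ~ ball v S (rad k) (cen k) x.
  case: (pselect (exists x, ball v S (rad j) (cen j) x /\ ~ ball v S (rad k) (cen k) x)) => // Hn.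
  exfalso; apply: nsub => x bx.
  by case: (pselect (ball v S (rad k) (cen k) x)) => // Hc; exfalso; apply: Hn; exists x.
have [_ s2] := key _ _ _ Mj Mk sub bx nbx.
have [] := s2 z (Hz _ _) => //.
by exists j, k, x.
Qed.

Lemma idD (A : zmodType) (p q x : A) : (p - x) - (q - x) = p - q.
Proof. by rewrite opprB addrA subrK. Qed.

Theorem mainTheorem8 (d : Order.disp_t) (G : orderType d) (infty : G)
  (A : zmodType) (v : A -> G) (n : nat) (Ai : 'I_n -> A -> Prop) :
  valued_group infty v ->
  (forall i, subgroup (Ai i)) ->
  (forall i, spherically_complete v (Ai i)) ->
  pseudo_direct infty v Ai ->
  spherically_complete v (sum_subgroups Ai).
Proof.
move=> VG Hsub Hsc Hpd N Nn.
set S := sum_subgroups Ai.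
have Ssub : forall a b, S a -> S b -> S (a - b).
  move=> a b [fa [ha ->]] [fb [hb ->]]; exists (fun i => fa i - fb i); split.
    by move=> i; case: (Hsub i) => _ h; apply: h.
  by rewrite sumrB.
pose P := fun g : 'I_n -> A => forall i, Ai i (g i).
pose pi := fun g : 'I_n -> A => \sum_(i < n) g i.
have SP : forall g, P g -> S (pi g) by move=> g Pg; exists g.
case: (pselect (exists x, S x /\ forall B, N B -> B x)) => // Hno; exfalso.
have H : forall x, S x -> exists B, N B /\ ~ B x.
  move=> x Sx; case: (pselect (exists B, N B /\ ~ B x)) => // Hn.
  exfalso; apply: Hno; exists x; split=> // B NB.
  by case: (pselect (B x)) => // nb; exfalso; apply: Hn; exists B.
have cin : forall al c, S c -> ball v S al c c.
  by move=> al c Sc; split=> //; rewrite subrr (v0 VG) (vtop _ VG).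
have misslt : forall B al c x, (forall y, B y <-> ball v S al c y) -> S x -> ~ B x ->
    v (c - x) < al.
  move=> B al c x iff Sx nb; rewrite ltNge; apply/negP => h; apply: nb.
  by apply/iff.
have mu1 : forall x B al c B' al' c', S x -> N B -> N B' ->
    (forall y, B y <-> ball v S al c y) -> (forall y, B' y <-> ball v S al' c' y) ->
    S c -> S c' -> ~ B x -> ~ B' x -> (forall y, B y -> B' y) ->
    v (c - x) = v (c' - x).
  move=> x B al c B' al' c' Sx NB NB' iB iB' Sc Sc' nb nb' sub.
  have /iB' [_ h1] : B' c by apply: sub; apply/iB; exact: cin.
  have h2 := misslt _ _ _ _ iB' Sx nb'.
  apply: (viso VG); rewrite idD; exact: lt_le_trans h2 h1.
have mu : forall x B al c B' al' c', S x -> N B -> N B' ->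
    (forall y, B y <-> ball v S al c y) -> (forall y, B' y <-> ball v S al' c' y) ->
    S c -> S c' -> ~ B x -> ~ B' x -> v (c - x) = v (c' - x).
  move=> x B al c B' al' c' Sx NB NB' iB iB' Sc Sc' nb nb'.
  case: (Nn.2 _ _ NB NB') => sub; first exact: (mu1 x B al c B' al' c').
  by apply/esym; apply: (mu1 x B' al' c' B al c).
pose Dl := fun x g => exists B al c, N B /\ ~ B x /\ S c /\
   (forall y, B y <-> ball v S al c y) /\ g = v (c - x).
pose delta := fun x => epsilon (inhabits infty) (Dl x).
have dspec : forall x, S x -> Dl x (delta x).
  move=> x Sx; apply: epsilon_spec.
  have [B [NB nb]] := H x Sx.
  have [al [c [Sc [_ iB]]]] := Nn.1 B NB.
  by exists (v (c - x)), B, al, c.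
have deq : forall x B al c, S x -> N B -> (forall y, B y <-> ball v S al c y) ->
    S c -> ~ B x -> delta x = v (c - x).
  move=> x B al c Sx NB iB Sc nb.
  have [B' [al' [c' [NB' [nb' [Sc' [iB' ->]]]]]]] := dspec x Sx.
  exact: (mu x B' al' c' B al c).
have L4 : forall B al c y, N B -> (forall z, B z <-> ball v S al c z) -> S c ->
    S y -> B y -> al <= delta y.
  move=> B al c y NB iB Sc Sy By.
  have [B' [al' [c' [NB' [nb' [Sc' [iB' ->]]]]]]] := dspec y Sy.
  case: (Nn.2 _ _ NB NB') => sub; first by exfalso; apply: nb'; apply: sub.
  have /iB [_ h1] : B c' by apply: sub; apply/iB'; exact: cin.
  have /iB [_ h2] := By.
  by rewrite (idB c); apply: (vsub VG).
have L2 : forall x y, S x -> S y -> delta x <= v (x - y) -> delta x <= delta y.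
  move=> x y Sx Sy h.
  have [B [al [c [NB [nb [Sc [iB e]]]]]]] := dspec x Sx.
  have lt := misslt _ _ _ _ iB Sx nb.
  case: (pselect (B y)) => By.
    apply: ltW; apply: lt_le_trans (L4 _ _ _ _ NB iB Sc Sy By).
    by rewrite e.
  rewrite (deq y B al c) // (idC _ _ x); apply: (vsub VG); first by rewrite e.
  by rewrite (vsym _ _ VG).
have L3 : forall x B al c y, S x -> N B -> (forall z, B z <-> ball v S al c z) ->
    S c -> ~ B x -> S y -> v (c - x) < v (c - y) -> delta x < delta y.
  move=> x B al c y Sx NB iB Sc nb Sy h.
  rewrite (deq x B al c) //.
  case: (pselect (B y)) => By.
    apply: lt_le_trans (L4 _ _ _ _ NB iB Sc Sy By).
    exact: misslt _ _ _ _ iB Sx nb.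
  by rewrite (deq y B al c).
pose Din := fun g h : 'I_n -> A => forall i, delta (pi g) <= v (g i - h i).
have Dmono : forall g h, P g -> P h -> Din g h -> delta (pi g) <= delta (pi h).
  move=> g h Pg Ph D; apply: L2; try exact: SP.
  by rewrite /pi -sumrB; apply: (vsum VG).
have Dtrans : forall g h k, P g -> P h -> P k -> Din g h -> Din h k -> Din g k.
  move=> g h k Pg Ph Pk Dgh Dhk i; rewrite (idC _ _ (h i)).
  apply: (vsub VG) => //; rewrite (vsym _ _ VG).
  exact: le_trans (Dmono _ _ Pg Ph Dgh) (Dhk i).
pose P' := fun F : ('I_n -> A) -> Prop => (forall g, F g -> P g) /\
   (forall g h, F g -> F h -> Din g h \/ Din h g).
have [Mx [[MxP MxN] Mmax]] : exists M, P' M /\ forall B, proper M B -> ~ P' B.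
  apply: Zorn_bigcup.
  move=> F FP Ftot; split.
    by move=> g [X FX Xg]; exact: (FP X FX).1.
  move=> g h [X FX Xg] [Y FY Yh].
  case: (Ftot X Y FX FY) => XY.
    by apply: (FP Y FY).2 => //; apply: XY.
  by apply: (FP X FX).2 => //; apply: XY.
have zex : forall i, exists z, Ai i z /\
    forall g, Mx g -> delta (pi g) <= v (g i - z).
  move=> i; apply: (gen VG (Hsub i) (Hsc i)).
    by move=> g Mg; apply: MxP.
  move=> g h Mg Mh; case: (MxN g h Mg Mh) => D.
    right; move=> y [Ay hy]; split=> //; rewrite (idC _ _ (h i)).
    apply: (vsub VG); first exact: D.
    rewrite (vsym _ _ VG); exact: le_trans (Dmono _ _ (MxP _ Mg) (MxP _ Mh) D) hy.
  left; move=> y [Ay hy]; split=> //; rewrite (idC _ _ (g i)).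
  apply: (vsub VG); first exact: D.
  rewrite (vsym _ _ VG); exact: le_trans (Dmono _ _ (MxP _ Mh) (MxP _ Mg) D) hy.
have [gs gsP] := @boolp.choice _ _ _ zex.
have Pgs : P gs by move=> i; case: (gsP i).
have Dgs : forall g, Mx g -> Din g gs by move=> g Mg i; case: (gsP i) => _; apply.
set x := pi gs.
have Sx : S x := SP _ Pgs.
have [B [NB nb]] := H x Sx.
have [al [c [Sc [_ iB]]]] := Nn.1 B NB.
have hx := deq x B al c Sx NB iB Sc nb.
have lt := misslt _ _ _ _ iB Sx nb.
have cx0 : c - x != 0.
  apply/eqP => e; move: lt; rewrite e (v0 VG) => lt'.
  by have := lt_le_trans lt' (vtop al VG); rewrite ltxx.
have [f [Pf [vmin vlt]]] := Hpd (c - x) (Ssub _ _ Sc Sx) cx0.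
pose g' := fun i => gs i + f i.
have Pg' : P g'.
  move=> i; rewrite /g'.
  have -> : gs i + f i = gs i - (0 - f i) by rewrite sub0r opprK.
  case: (Hsub i) => A0 hs; apply: (hs); first exact: Pgs.
  by apply: (hs) => //; exact: Pf.
have pig' : pi g' = x + \sum_(i < n) f i by rewrite /pi /g' big_split.
have vf : v (\sum_(i < n) f i) = v (c - x) := viso VG vlt.
have fge : forall i, delta x <= v (f i).
  by move=> i; rewrite hx -vf vmin; apply: bigmin_le.
have dlt : delta x < delta (pi g').
  apply: (L3 x B al c) => //; first exact: SP.
  by rewrite pig' opprD addrA.
have Dg' : Din gs g'.
  by move=> i; rewrite /g' opprD addrA subrr sub0r (vN _ VG); apply: fge.
have Mg' : Mx g'.
  case: (pselect (Mx g')) => // nM; exfalso.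
  apply: (Mmax (fun h => Mx h \/ h = g')).
    split; first by move=> h Mh; left.
    by move=> sub; apply: nM; apply: sub; right.
  split.
    by move=> h [Mh|->]; [apply: MxP|].
  have Dto : forall h, Mx h -> Din h g'.
    by move=> h Mh; apply: (Dtrans h gs) => //; [apply: MxP|apply: Dgs].
  move=> h k [Mh|->] [Mk|->].
  - exact: MxN.
  - by left; apply: Dto.
  - by right; apply: Dto.
  - by left=> i; rewrite subrr (v0 VG) (vtop _ VG).
have : delta (pi g') <= v (\sum_(i < n) f i).
  rewrite vmin; apply: le_bigmin; first exact: (vtop _ VG).
  move=> i; have := Dgs g' Mg' i.
  have -> : g' i - gs i = f i by rewrite /g' /= addrAC subrr add0r.
  by [].
rewrite vf -hx => h.
by have := lt_le_trans dlt h; rewrite ltxx.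
Qed.
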